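(* Let $n\ge 3$ and consider the Markov chain on the state space $\{0,1,\dots,n-1\}$ with the $n\times n$ transition probability matrix $\mathbf P=(P_{ij})$ given by: $P_{00}=5/6$, $P_{01}=1/6$; $P_{10}=5/6$, $P_{12}=1/6$; for $2\le i\le n-2$: $P_{i0}=2/3$, $P_{i,i-1}=1/6$, $P_{i,i+1}=1/6$; $P_{n-1,0}=5/6$, $P_{n-1,n-2}=1/6$; and all other entries $0$. Then the steady state probability vector, i.e. the unique probability vector $\vec\pi=(\pi_0,\dots,\pi_{n-1})$ with $\vec\pi=\vec\pi\mathbf P$ and $\sum_i\pi_i=1$, is $$\vec\pi=\left(\frac{2B_n}{b_{n+1}},\frac{2B_{n-1}}{b_{n+1}},\dots,\frac{2B_1}{b_{n+1}}\right),$$ that is, $\pi_i=\dfrac{2B_{n-i}}{b_{n+1}}$ for $i=0,1,\dots,n-1$.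
   Context: The balancing numbers $B_m$ are defined by $B_0=0$, $B_1=1$, $B_{m+1}=6B_m-B_{m-1}$ (so $B_2=6$, $B_3=35,\dots$). The cobalancing numbers $b_m$ are defined by $b_0=0$, $b_1=0$, $b_{m+1}=6b_m-b_{m-1}+2$ (so $b_2=2$, $b_3=14,\dots$). *)

(* Defs.v *)
From HB Require Import structures.
From mathcomp Require Import all_boot all_order all_algebra.
Set Implicit Arguments. Unset Strict Implicit. Unset Printing Implicit Defensive.
Import Order.TTheory GRing.Theory Num.Theory.
Local Open Scope ring_scope.

Fixpoint Bpair (m : nat) : int * int :=
  match m with
  | 0%N => (0, 1)
  | m'.+1 => let: (x, y) := Bpair m' in (y, 6 * y - x)
  end.
(* balancing numbers: B_0 = 0, B_1 = 1, B_{m+1} = 6 B_m - B_{m-1} *)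
Definition balancing (m : nat) : int := (Bpair m).1.

Fixpoint bpair (m : nat) : int * int :=
  match m with
  | 0%N => (0, 0)
  | m'.+1 => let: (x, y) := bpair m' in (y, 6 * y - x + 2)
  end.
(* cobalancing numbers: b_0 = 0, b_1 = 0, b_{m+1} = 6 b_m - b_{m-1} + 2 *)
Definition cobalancing (m : nat) : int := (bpair m).1.

(* transition probability P_{ij} of the chain on {0,...,n-1} (intended n >= 3) *)
Definition Pentry (R : fieldType) (n i j : nat) : R :=
  if i == 0%N then
    (if j == 0%N then 5/6 else if j == 1%N then 1/6 else 0)
  else if i == 1%N then
    (if j == 0%N then 5/6 else if j == 2%N then 1/6 else 0)
  else if i == n.-1 then
    (if j == 0%N then 5/6 else if j == (n - 2)%N then 1/6 else 0)
  else
    (if j == 0%N then 2/3 else if j == i.-1 then 1/6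
     else if j == i.+1 then 1/6 else 0).

Definition Pmat (R : fieldType) (n : nat) : 'M[R]_n :=
  \matrix_(i < n, j < n) Pentry R n i j.

Definition prob_vec (R : numFieldType) (n : nat) (p : 'rV[R]_n) : Prop :=
  (forall i, 0 <= p 0 i) /\ \sum_(i < n) p 0 i = 1.

Lemma Bcheck : [:: balancing 0; balancing 1; balancing 2; balancing 3] = [:: 0; 1; 6; 35].
Proof. by []. Qed.
Lemma bcheck : [:: cobalancing 0; cobalancing 1; cobalancing 2; cobalancing 3; cobalancing 4] = [:: 0; 0; 2; 14; 84].
Proof. by []. Qed.

(* Main.v *)
Require Import Defs.
From HB Require Import structures.
From mathcomp Require Import all_boot all_order all_algebra.
From mathcomp Require Import zify ring lra.
Import Order.TTheory GRing.Theory Num.Theory.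
Local Open Scope ring_scope.

Lemma BS m : balancing m.+2 = 6 * balancing m.+1 - balancing m.
Proof. by rewrite /balancing /=; case: (Bpair m). Qed.
Lemma bS m : cobalancing m.+2 = 6 * cobalancing m.+1 - cobalancing m + 2.
Proof. by rewrite /cobalancing /=; case: (bpair m). Qed.

Lemma Bmono m : 0 <= balancing m /\ balancing m <= balancing m.+1 /\ 1 <= balancing m.+1.
Proof.
elim: m => [|m [h1 [h2 h3]]]; first by [].
rewrite BS; lia.
Qed.

Lemma bstep m : cobalancing m.+1 = cobalancing m + 2 * balancing m.
Proof.
suff: forall m, cobalancing m.+1 = cobalancing m + 2 * balancing m /\
   cobalancing m.+2 = cobalancing m.+1 + 2 * balancing m.+1 by move=> /(_ m) [].
elim=> [|k [h1 h2]]; first by [].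
split=> //. rewrite bS BS. have := bS k. lia.
Qed.

Lemma I2 m : 5 * balancing m.+1 - balancing m - 1 = 2 * cobalancing m.+2.
Proof.
suff: forall m, 5 * balancing m.+1 - balancing m - 1 = 2 * cobalancing m.+2 /\
   5 * balancing m.+2 - balancing m.+1 - 1 = 2 * cobalancing m.+3 by move=> /(_ m) [].
elim=> [|k [h1 h2]]; first by [].
split=> //. rewrite [cobalancing k.+4]bS [balancing k.+3]BS. have := bS k.+1. have := bS k. have := BS k. lia.
Qed.

Section S.
Context {R : realFieldType}.
Definition BR m : R := (balancing m)%:~R.
Lemma test (x y c : R) : (5*x - y - 1) * c = 2 -> 2 * x * c = 2/3 + 1/6*(2 * y * c + 2 * x*c + 2 * c).
Proof. move=> H. lra. Qed.
Lemma sum_delta (F : nat -> R) n k :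
  \sum_(i < n) F i * ((i : nat) == k)%:R = if (k < n)%N then F k else 0.
Proof.
elim: n => [|n IH]; first by rewrite big_ord0.
rewrite big_ord_recr /= IH.
case: eqP => e; case: ifP => h1; case: ifP => h2; rewrite ?mulr1 ?mulr0 ?addr0 ?add0r //; try lia.
by subst.
Qed.
Lemma P0E n i : (3 <= n)%N -> (i < n)%N ->
  Pentry R n i 0 = 2/3 + 1/6 * ((i == 1)%:R + (i == 0)%:R + (i == n.-1)%:R).
Proof.
move=> hn hi; rewrite /Pentry.
repeat case: eqP => ?; rewrite /= ?mulr1n ?mulr0n; try lia; lra.
Qed.
Lemma PjE n i j : (3 <= n)%N -> (i < n)%N -> (0 < j < n)%N ->
  Pentry R n i j = 1/6 * ((i == j.+1)%:R + (i == j.-1)%:R).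
Proof.
move=> hn hi hj; rewrite /Pentry.
repeat case: eqP => ?; rewrite /= ?mulr1n ?mulr0n; try lia; lra.
Qed.
Lemma sum_col0 (F : nat -> R) n : (3 <= n)%N ->
  \sum_(i < n) F i * Pentry R n i 0 = 2/3 * \sum_(i < n) F i + 1/6 * (F 1%N + F 0%N + F n.-1).
Proof.
move=> hn.
rewrite (eq_bigr (fun i : 'I_n => 2/3 * F i + 1/6 * (F i * ((i:nat) == 1%N)%:R + F i * ((i:nat) == 0%N)%:R + F i * ((i:nat) == n.-1)%:R))).
  rewrite big_split /= -mulr_sumr -mulr_sumr !big_split /= !sum_delta.
  have h1 : (1 < n)%N by lia. have h2 : (0 < n)%N by lia. have h3 : (n.-1 < n)%N by lia.
  by rewrite h1 h2 h3.
move=> i _; rewrite P0E //; ring.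
Qed.
Lemma sum_colj (F : nat -> R) n j : (3 <= n)%N -> (0 < j < n)%N ->
  \sum_(i < n) F i * Pentry R n i j = 1/6 * ((if (j.+1 < n)%N then F j.+1 else 0) + F j.-1).
Proof.
move=> hn hj.
rewrite (eq_bigr (fun i : 'I_n => 1/6 * (F i * ((i:nat) == j.+1)%:R + F i * ((i:nat) == j.-1)%:R))).
  rewrite -mulr_sumr !big_split /= !sum_delta.
  have h3 : (j.-1 < n)%N by lia.
  by rewrite h3.
move=> i _; rewrite PjE //; ring.
Qed.
End S.

Lemma colE (R : realFieldType) n (p : 'rV[R]_n) (j : 'I_n) :
  (p *m Pmat R n) 0 j = \sum_(i < n) p 0 i * Pentry R n i j.
Proof. rewrite !mxE; apply: eq_bigr => i _; by rewrite mxE. Qed.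

Lemma bnonneg m : 0 <= cobalancing m.
Proof. elim: m => [//|m IH]; rewrite bstep; have := Bmono m; lia. Qed.

Lemma sumB (R : realFieldType) n : 2 * \sum_(i < n) (balancing (n - i))%:~R = (cobalancing n.+1)%:~R :> R.
Proof.
elim: n => [|n IH]; first by rewrite big_ord0 mulr0.
rewrite big_ord_recl /= subn0.
under eq_bigr => i _ do rewrite subSS.
rewrite mulrDr IH (bstep n.+1) intrD intrM.
by rewrite addrC.
Qed.

Theorem theorem2p1 (R : realFieldType) (n : nat) (hn : (3 <= n)%N) :
  let v : 'rV[R]_n :=
    \row_(i < n) (2 * (balancing (n - i))%:~R / (cobalancing n.+1)%:~R) in
  [/\ prob_vec v, v *m Pmat R n = v &
      forall p : 'rV[R]_n, prob_vec p -> p *m Pmat R n = p -> p = v].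
Proof.
case: n hn => [//|m] hn v.
set bb : R := (cobalancing m.+2)%:~R.
have bbpos : 0 < bb.
  rewrite /bb ltr0z bstep; have := Bmono m; have := bnonneg m.+1; lia.
have bb0 : bb != 0 by rewrite gt_eqF.
have vE : forall i : 'I_m.+1, v 0 i = 2 * (balancing (m.+1 - i))%:~R / bb.
  by move=> i; rewrite mxE.
have hsumF : \sum_(i < m.+1) 2 * (balancing (m.+1 - i))%:~R / bb = 1.
  by rewrite -mulr_suml -mulr_sumr sumB divff.
split.
- split=> [i|]; last by under eq_bigr => i _ do rewrite vE.
  rewrite vE; apply: divr_ge0; last exact: ltW.
  apply: mulr_ge0 => //; rewrite ler0z; have := Bmono (m.+1 - i); lia.
- apply/rowP => j; rewrite colE vE.
  under eq_bigr => i _ do rewrite vE.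
  case: j => [[|j] hj] /=.
  + rewrite (sum_col0 (fun k => 2 * (balancing (m.+1 - k))%:~R / bb)) // hsumF /=.
    rewrite subn0 subn1 /= subSnn.
    have I2R : 5 * (balancing m.+1)%:~R - (balancing m)%:~R - 1 = 2 * bb :> R.
      have := congr1 (fun z : int => z%:~R : R) (I2 m); rewrite /= !intrB !intrM /bb => ->.
      by [].
    have H : (5 * (balancing m.+1)%:~R - (balancing m)%:~R - 1) * bb^-1 = 2 :> R.
      by rewrite I2R -mulrA divff // mulr1.
    rewrite (_ : balancing 1 = 1) //.
    lra.
  + rewrite (sum_colj (fun k => 2 * (balancing (m.+1 - k))%:~R / bb)) //= subSS.
    case: ifP => h.
    * rewrite subSS.
      have e1 : (m - j = (m - j.+1).+1)%N by lia.
      have e2 : (m.+1 - j = (m - j.+1).+2)%N by lia.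
      rewrite e1 e2 BS intrB intrM; lra.
    * have e1 : (m - j = 1)%N by lia.
      have e2 : (m.+1 - j = 2)%N by lia.
      rewrite ?subSS e1 e2 (_ : balancing 1 = 1) // (_ : balancing 2 = 6) //; lra.
- move=> p [_ psum] stat.
  pose q k := p 0 (inord k : 'I_m.+1).
  have qE : forall i : 'I_m.+1, p 0 i = q i by move=> i; rewrite /q inord_val.
  have colq : forall j, (0 < j < m.+1)%N -> q j = 1/6 * ((if (j.+1 < m.+1)%N then q j.+1 else 0) + q j.-1).
    move=> j hj; have hjn : (j < m.+1)%N by lia.
    have := congr1 (fun M : 'rV_m.+1 => M 0 (Ordinal hjn)) stat => /=.
    rewrite colE; under eq_bigr => i _ do rewrite qE.
    rewrite sum_colj // => ->.
    by rewrite qE.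
  have claim : forall t, (t.+1 < m.+1)%N ->
      q (m - t)%N = q m * (balancing t.+1)%:~R /\ q (m - t.+1)%N = q m * (balancing t.+2)%:~R.
    elim=> [|t IH] ht.
    - rewrite subn0 (_ : balancing 1 = 1) // (_ : balancing 2 = 6) // mulr1; split=> //.
      have := colq m (ltac:(lia)); rewrite ltnn subn1; lra.
    - have [h1 h2] := IH (ltac:(lia)); split=> //.
      have := colq (m - t.+1)%N (ltac:(lia)).
      have -> : ((m - t.+1).+1 < m.+1)%N by lia.
      have -> : ((m - t.+1).+1 = m - t)%N by lia.
      have -> : ((m - t.+1).-1 = m - t.+2)%N by lia.
      rewrite BS intrB intrM; lra.
  have pE : forall i : 'I_m.+1, p 0 i = q m * (balancing (m.+1 - i))%:~R.
    move=> i; rewrite qE; case: i => [[|i] hi] /=.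
    + have := (claim m.-1 (ltac:(lia))).2.
      have -> : (m - m.-1.+1 = 0)%N by lia.
      by have -> : (m.-1.+2 = m.+1)%N by lia.
    + have := (claim (m - i.+1)%N (ltac:(lia))).1.
      have -> : (m - (m - i.+1) = i.+1)%N by lia.
      by have -> : ((m - i.+1).+1 = m - i)%N by lia.
  have Hq : q m * bb = 2.
    have hs : \sum_(i < m.+1) p 0 i = q m * \sum_(i < m.+1) (balancing (m.+1 - i))%:~R.
      by rewrite mulr_sumr; apply: eq_bigr => i _; rewrite pE.
    by rewrite /bb -sumB mulrCA -hs psum mulr1.
  have qmE : q m = 2 / bb by rewrite -Hq mulfK.
  apply/rowP => i; rewrite pE vE qmE; by rewrite mulrAC.
Qed.
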